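(* Let $0<p\le 1$, $\epsilon>0$, $m\ge1$, let $\mathcal{C}\subseteq\mathbb{R}^m$ be a nonempty closed convex set, and let $f_p(\boldsymbol{z};\epsilon)=\sum_{i=1}^{m}(z_i^2+\epsilon^2)^{p/2}$. Consider the problem $\mathscr{P}_{\mathrm{sm}}(\epsilon)$: minimize $f_p(\boldsymbol{z};\epsilon)$ over $\boldsymbol{z}\in\mathcal{C}$. Generate a sequence by the iterative reweighted-$\ell_2$ algorithm: start with $\boldsymbol{\omega}^{[0]}=(1,\dots,1)$, and for $n=0,1,2,\dots$ set $$\boldsymbol{z}^{[n+1]}=\arg\min_{\boldsymbol{z}\in\mathcal{C}}\sum_{i=1}^{m}\omega_i^{[n]}z_i^2,\qquad \omega_i^{[n+1]}=\frac{p}{2}\left[\left(z_i^{[n+1]}\right)^2+\epsilon^2\right]^{\frac{p}{2}-1},\ i=1,\dots,m.$$ Then every limit point $\bar{\boldsymbol{z}}$ of $\{\boldsymbol{z}^{[n]}\}_{n\ge1}$ is a KKT point of $\mathscr{P}_{\mathrm{sm}}(\epsilon)$, and $f_p(\boldsymbol{z}^{[n]};\epsilon)$ converges monotonically (nonincreasingly) to $f_p(\boldsymbol{z}^{\star};\epsilon)$ for some KKT point $\boldsymbol{z}^{\star}$ of $\mathscr{P}_{\mathrm{sm}}(\epsilon)$.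
   Context: The normal cone of a convex set $\mathcal{C}$ at $\boldsymbol{z}\in\mathcal{C}$ is $\mathcal{N}_{\mathcal{C}}(\boldsymbol{z})=\{\boldsymbol{s}:\langle\boldsymbol{s},\boldsymbol{x}-\boldsymbol{z}\rangle\le0\ \forall\boldsymbol{x}\in\mathcal{C}\}$. A KKT point of $\mathscr{P}_{\mathrm{sm}}(\epsilon)$ is a point $\boldsymbol{z}\in\mathcal{C}$ with $0\in\nabla_{\boldsymbol{z}}f_p(\boldsymbol{z};\epsilon)+\mathcal{N}_{\mathcal{C}}(\boldsymbol{z})$. *)

(* Defs.v *)
From HB Require Import structures.
From mathcomp Require Import all_boot all_order all_algebra.
From mathcomp Require Import all_classical all_reals all_analysis.
Set Implicit Arguments. Unset Strict Implicit. Unset Printing Implicit Defensive.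
Import Order.TTheory GRing.Theory Num.Theory.
Import numFieldNormedType.Exports.
Local Open Scope classical_set_scope.
Local Open Scope ring_scope.

Definition convex_rV (R : realType) (m : nat) (C : set 'rV[R]_m) : Prop :=
  forall x y : 'rV[R]_m, forall t : R, C x -> C y -> 0 <= t -> t <= 1 ->
    C (t *: x + (1 - t) *: y).

Definition inner (R : realType) (m : nat) (u v : 'rV[R]_m) : R :=
  \sum_(i < m) u ord0 i * v ord0 i.

Definition fp (R : realType) (m : nat) (p eps : R) (z : 'rV[R]_m) : R :=
  \sum_(i < m) powR (z ord0 i ^+ 2 + eps ^+ 2) (p / 2).

Definition evec (R : realType) (m : nat) (i : 'I_m) : 'rV[R]_m :=
  delta_mx ord0 i.

Definition grad (R : realType) (m : nat) (f : 'rV[R]_m -> R) (z : 'rV[R]_m)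
  : 'rV[R]_m :=
  \row_(i < m) (derive1 (fun t : R => f (z + t *: evec R i)) 0).

Definition normal_cone (R : realType) (m : nat) (C : set 'rV[R]_m)
  (z : 'rV[R]_m) : set 'rV[R]_m :=
  [set s | forall x, C x -> inner s (x - z) <= 0].

Definition KKT_point (R : realType) (m : nat) (p eps : R) (C : set 'rV[R]_m)
  (z : 'rV[R]_m) : Prop :=
  C z /\ exists s, normal_cone C z s /\ grad (fp p eps) z + s = 0.

Definition seq_limit_point (R : realType) (m : nat) (u : nat -> 'rV[R]_m)
  (zbar : 'rV[R]_m) : Prop :=
  forall e : R, 0 < e -> forall N : nat, exists n : nat,
    (1 <= n)%N /\ (N <= n)%N /\ `|u n - zbar| < e.

(* Main.v *)
Require Import Defs.
From HB Require Import structures.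
From mathcomp Require Import all_boot all_order all_algebra.
From mathcomp Require Import all_classical all_reals all_analysis.
Import Order.TTheory GRing.Theory Num.Theory.
Import numFieldNormedType.Exports.
Local Open Scope classical_set_scope.
Local Open Scope ring_scope.
From mathcomp Require Import ring lra.

Lemma powR_cont (R : realType) (q x : R) : 0 < x -> {for x, continuous (fun y : R => powR y q)}.
Proof.
move=> x0; apply: differentiable_continuous; apply/derivable1_diffP.
by apply: derivable_powR; rewrite in_itv /= x0.
Qed.

Lemma powR_cvgn (R : realType) (q x : R) (u : nat -> R) : 0 < x ->
  u n @[n --> \oo] --> x -> powR (u n) q @[n --> \oo] --> powR x q.
Proof.
move=> x0 ux; have H := cvg_comp _ _ ux (@powR_cont R q x x0); exact: H.
Qed.

Lemma sum_cvgn (R : realType) m (f : 'I_m -> nat -> R) (l : 'I_m -> R) :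
  (forall i, f i n @[n --> \oo] --> l i) ->
  \sum_(i < m) f i n @[n --> \oo] --> \sum_(i < m) l i.
Proof.
move=> H.
suff G : forall s : seq 'I_m, \sum_(i <- s) f i n @[n --> \oo] --> \sum_(i <- s) l i.
  exact: G.
elim=> [|j s IH].
  by rewrite big_nil; under eq_fun do rewrite big_nil; exact: cvg_cst.
rewrite big_cons; under eq_fun do rewrite big_cons.
exact: cvgD.
Qed.

Lemma arith1 (R : realType) (bq a1 aq B A q : R) : aq = A * a1 ->
  bq <= (B * q + A * (1 - q)) * a1 -> bq <= aq + q * a1 * (B - A).
Proof.
move=> -> H; have -> : A * a1 + q * a1 * (B - A) = (B * q + A * (1 - q)) * a1 by ring.
exact: H.
Qed.

Lemma tangent (R : realType) (q A B : R) : 0 < q -> q < 1 -> 0 < A -> 0 < B ->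
  B `^ q <= A `^ q + q * A `^ (q - 1) * (B - A).
Proof.
move=> q0 q1 A0 B0.
have q1' : 0 < 1 - q by rewrite subr_gt0.
have Y := @conjugate_powR R (B `^ q) (A `^ (1 - q)) q^-1 (1 - q)^-1
  (powR_ge0 _ _) (powR_ge0 _ _) (eqbRL (invr_gt0 _) q0) (eqbRL (invr_gt0 _) q1').
rewrite !invrK addrC subrK in Y; have {Y} := Y erefl.
rewrite -!powRrM mulfV ?gt_eqF // mulfV ?gt_eqF // (powRr1 (ltW B0)) (powRr1 (ltW A0)).
move=> Y0.
have Y : B `^ q * A `^ (1 - q) <= B * q + A * (1 - q) := Y0.
clear Y0.
have a1pos : 0 < A `^ (q - 1) by apply: powR_gt0.
have E1 : A `^ (1 - q) * A `^ (q - 1) = 1.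
  rewrite -powRD; last by apply/implyP => _; rewrite gt_eqF.
  have -> : (1 - q) + (q - 1) = 0 by ring.
  by rewrite powRr0.
have E2 : A * A `^ (q - 1) = A `^ q by rewrite mulr_powRB1 // ltW.
have := ler_wpM2r (ltW a1pos) Y.
rewrite -(mulrA (B `^ q)) E1 mulr1 => Y2.
apply: arith1. exact: (esym E2). exact: Y2.
Qed.

Lemma coord_le (R : realType) m (A : 'rV[R]_m) i : `|A ord0 i| <= `|A|.
Proof.
have /mapP[j Hj ->] : `|A ord0 i| \in [seq `|A x.1 x.2| | x : 'I_1 * 'I_m].
  by apply/mapP; exists (ord0, i) => //=; rewrite mem_enum.
by rewrite [leRHS]/Num.norm /= mx_normrE; apply/bigmax_geP; right => /=; exists j.
Qed.

Lemma coord_cvg (R : realType) m (u : nat -> 'rV[R]_m) (a : 'rV[R]_m) i :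
  u k @[k --> \oo] --> a -> (u k ord0 i) @[k --> \oo] --> a ord0 i.
Proof.
move/cvgrPdist_lt => H; apply/cvgrPdist_lt => e e0.
apply: filterS (H e e0) => k; apply: le_lt_trans.
by have := @coord_le R m (a - u k) i; rewrite !mxE.
Qed.

Lemma sigma_oo (s : nat -> nat) : (forall k, (k <= s k)%N) -> s k @[k --> \oo] --> \oo.
Proof.
move=> H A [N _ HN]; exists N => // k /= Hk; apply: HN; exact: leq_trans Hk (H k).
Qed.

Lemma subseq_cvg (R : realType) (v : nat -> R) (l : R) (s : nat -> nat) :
  (forall k, (k <= s k)%N) -> v n @[n --> \oo] --> l -> v (s k) @[k --> \oo] --> l.
Proof. move=> H Hv; have G := cvg_comp _ _ (@sigma_oo s H) Hv; exact: G. Qed.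

Lemma limpt_subseq (R : realType) m (z : nat -> 'rV[R]_m) zbar :
  seq_limit_point z zbar -> exists s : nat -> nat,
   (forall k, (1 <= s k)%N /\ (k <= s k)%N) /\ z (s k) @[k --> \oo] --> zbar.
Proof.
move=> Hl.
have H : forall k : nat, exists n : nat, ((1 <= n)%N /\ (k <= n)%N) /\
    `|z n - zbar| < (k.+1%:R)^-1.
  move=> k; have [n [H1 [H2 H3]]] := Hl (k.+1%:R^-1) (ltac:(by rewrite invr_gt0)) k.
  by exists n.
have [s Hs] := choice H; exists s; split; first by move=> k; case: (Hs k).
apply/cvgrPdist_lt => e e0.
near=> k.
rewrite distrC; apply: (lt_trans (proj2 (Hs k))).
near: k.
exact: (near_infty_natSinv_lt (PosNum e0)).
Unshelve. all: by end_near. Qed.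

Lemma qmin_vi (R : realType) m (C : set 'rV[R]_m) (v : 'I_m -> R) (x : 'rV[R]_m) :
  convex_rV C -> C x ->
  (forall y, C y -> \sum_(i < m) v i * x ord0 i ^+ 2 <= \sum_(i < m) v i * y ord0 i ^+ 2) ->
  forall y, C y -> 0 <= \sum_(i < m) v i * x ord0 i * (y ord0 i - x ord0 i).
Proof.
move=> Cc Cx Hmin y Cy.
set S1 := \sum_(i < m) v i * x ord0 i * (y ord0 i - x ord0 i).
set S2 := \sum_(i < m) v i * (y ord0 i - x ord0 i) ^+ 2.
have key : forall t : R, 0 < t -> t <= 1 -> 0 <= 2 * S1 + t * S2.
  move=> t t0 t1.
  have := Hmin _ (Cc y x t Cy Cx (ltW t0) t1).
  rewrite [X in _ <= X](eq_bigr (fun i => v i * x ord0 i ^+ 2 + t * (2 * (v i * x ord0 i * (y ord0 i - x ord0 i)) + t * (v i * (y ord0 i - x ord0 i) ^+ 2)))); last first.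
    by move=> i _; rewrite !mxE; ring.
  rewrite big_split /= -mulr_sumr big_split /= -!mulr_sumr.
  by rewrite lerDl pmulr_rge0.
rewrite leNgt; apply/negP => S1neg.
case: (lerP S2 0) => HS2.
  by have := key 1 ltr01 (lexx 1); lra.
pose t := Num.min 1 (- S1 / S2).
have t0 : 0 < t by rewrite lt_min ltr01 /= divr_gt0 // oppr_gt0.
have t1 : t <= 1 by rewrite ge_min lexx.
have tS2 : t * S2 <= - S1.
  have : t <= - S1 / S2 by rewrite ge_min lexx orbT.
  move/(ler_wpM2r (ltW HS2)); rewrite divfK //; by rewrite gt_eqF.
by have := key t t0 t1; lra.
Qed.

Lemma qmin_gap (R : realType) m (C : set 'rV[R]_m) (v : 'I_m -> R) (x : 'rV[R]_m) :
  convex_rV C -> C x ->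
  (forall y, C y -> \sum_(i < m) v i * x ord0 i ^+ 2 <= \sum_(i < m) v i * y ord0 i ^+ 2) ->
  forall y, C y -> \sum_(i < m) v i * (y ord0 i - x ord0 i) ^+ 2 <=
     \sum_(i < m) v i * y ord0 i ^+ 2 - \sum_(i < m) v i * x ord0 i ^+ 2.
Proof.
move=> Cc Cx Hmin y Cy.
have := @qmin_vi _ _ _ _ _ Cc Cx Hmin y Cy.
move=> H.
rewrite -sumrB [X in _ <= X](eq_bigr (fun i => v i * (y ord0 i - x ord0 i) ^+ 2 + 2 * (v i * x ord0 i * (y ord0 i - x ord0 i)))); last first.
  by move=> i _; ring.
rewrite big_split /= -mulr_sumr.
rewrite lerDl; exact: mulr_ge0.
Qed.

Lemma deriv_inner (R : realType) (a c e x : R) :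
  is_derive x 1 (fun t : R => (a + t * c) ^+ 2 + e) (2 * (a + x * c) * c).
Proof.
have -> : (fun t : R => (a + t * c) ^+ 2 + e) = (cst a + c \*: id) ^+ 2 + cst e.
  by apply/funext => t /=; rewrite !fctE /= [c *: t]mulrC.
apply: is_derive_eq.
rewrite !fctE /= expr1 add0r addr0.
change ((2 * (a + c * x)) * (c * 1) = 2 * (a + x * c) * c); ring.
Qed.

Lemma is_derive_comp1 (R : realType) (f g : R -> R) (x df dg : R) :
  is_derive x 1 f df -> is_derive (f x) 1 g dg -> is_derive x 1 (g \o f) (dg * df).
Proof.
move=> Hf Hg; apply: DeriveDef.
  apply/derivable1_diffP; apply: differentiable_comp; apply/derivable1_diffP.
    exact: ex_derive.
  exact: ex_derive.
rewrite -derive1E derive1_comp; [|exact: ex_derive|exact: ex_derive].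
by rewrite !derive1E !derive_val.
Qed.


Lemma grad_fp (R : realType) m (p eps : R) (z : 'rV[R]_m) i : 0 < eps ->
  grad (fp p eps) z ord0 i = p * z ord0 i * powR (z ord0 i ^+ 2 + eps ^+ 2) (p / 2 - 1).
Proof.
move=> e0.
have Ec : forall j, evec R i ord0 j = (j == i)%:R by move=> j; rewrite /evec mxE eqxx.
rewrite /grad mxE.
have E : (fun t => fp p eps (z + t *: evec R i)) = \sum_(j < m) (fun t => powR ((z ord0 j + t * evec R i ord0 j) ^+ 2 + eps ^+ 2) (p/2)).
  apply/funext => t; rewrite /fp fct_sumE; apply: eq_bigr => j _.
  by rewrite [(z + _) ord0 j]mxE mxE.
rewrite E.
have pos : forall j, 0 < (z ord0 j + 0 * evec R i ord0 j) ^+ 2 + eps ^+ 2.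
  by move=> j; rewrite mul0r addr0 ltr_wpDl // ?sqr_ge0 // exprn_gt0.
have D : forall j, is_derive (0 : R) 1
   (fun t => powR ((z ord0 j + t * evec R i ord0 j) ^+ 2 + eps ^+ 2) (p/2))
   (p / 2 * powR ((z ord0 j + 0 * evec R i ord0 j) ^+ 2 + eps ^+ 2) (p / 2 - 1) *
     (2 * (z ord0 j + 0 * evec R i ord0 j) * evec R i ord0 j)).
  move=> j.
  exact: (@is_derive_comp1 R _ _ _ _ _ (@deriv_inner R (z ord0 j) (evec R i ord0 j) (eps ^+ 2) 0)
                          (@is_derive1_powR R (p / 2) _ (pos j))).
rewrite derive1E; have [_ ->] := is_derive_sum D.
rewrite (bigD1 i) //= big1 ?addr0; last first.
  by move=> j ji; rewrite Ec (negbTE ji) !mulr0.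
rewrite Ec eqxx mul0r addr0 mulr1.
move: (_ `^ _) => P.
have h2 : (2 : R) != 0 by rewrite pnatr_eq0.
by field.
Qed.

Lemma lim_ge (R : realType) (a : nat -> R) (b l : R) :
  (\forall n \near \oo, b <= a n) -> a n @[n --> \oo] --> l -> b <= l.
Proof.
move=> H al.
have := limr_ge (cvgP _ al) H.
rewrite (cvg_lim _ al); last exact: Rhausdorff.
by move=> h; apply: h; exact: _.
Qed.
Lemma lim_le (R : realType) (a : nat -> R) (b l : R) :
  (\forall n \near \oo, a n <= b) -> a n @[n --> \oo] --> l -> l <= b.
Proof.
move=> H al.
have := limr_le (cvgP _ al) H.
rewrite (cvg_lim _ al); last exact: Rhausdorff.
by move=> h; apply: h; exact: _.
Qed.

Lemma sqe_cvg (R : realType) (a : nat -> R) (x e : R) :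
  a n @[n --> \oo] --> x -> (a n ^+ 2 + e) @[n --> \oo] --> (x ^+ 2 + e).
Proof.
move=> ax; apply: cvgD; last exact: cvg_cst.
have H := cvgM ax ax.
under eq_fun do rewrite expr2.
rewrite expr2; exact: H.
Qed.

Lemma fp_cvg (R : realType) m (p eps : R) (u : nat -> 'rV[R]_m) (a : 'rV[R]_m) :
  0 < eps -> u k @[k --> \oo] --> a -> fp p eps (u k) @[k --> \oo] --> fp p eps a.
Proof.
move=> e0 ua; rewrite /fp; apply: sum_cvgn => i; apply: powR_cvgn.
  by rewrite ltr_wpDl // ?sqr_ge0 // exprn_gt0.
apply: sqe_cvg; exact: coord_cvg.
Qed.

Lemma arith2 (R : realType) (A0 X Y q P e : R) :
  A0 + q * P * ((Y + e) - (X + e)) = A0 + (q * P * Y - q * P * X).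
Proof. ring. Qed.

Theorem theorem2 (R : realType) (m : nat) (p eps : R) (C : set 'rV[R]_m)
  (z w : nat -> 'rV[R]_m) :
  0 < p -> p <= 1 -> 0 < eps -> (1 <= m)%N ->
  C !=set0 -> closed C -> convex_rV C ->
  w 0%N = const_mx 1 ->
  (forall n : nat, C (z n.+1) /\
     forall y, C y ->
       \sum_(i < m) w n ord0 i * z n.+1 ord0 i ^+ 2 <=
       \sum_(i < m) w n ord0 i * y ord0 i ^+ 2) ->
  (forall (n : nat) (i : 'I_m),
     w n.+1 ord0 i = p / 2 * powR (z n.+1 ord0 i ^+ 2 + eps ^+ 2) (p / 2 - 1)) ->
  (forall zbar, seq_limit_point z zbar -> KKT_point p eps C zbar) /\
  (forall n : nat, (1 <= n)%N -> fp p eps (z n.+1) <= fp p eps (z n)) /\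
  (exists zstar, KKT_point p eps C zstar /\
     (fun n => fp p eps (z n)) @ \oo --> fp p eps zstar).
Proof.
move=> p0 p1 e0 m1 Cne Ccl Ccv w0 Hz Hw.
have q0 : 0 < p / 2 by rewrite divr_gt0.
have q1 : p / 2 < 1 by lra.
have hpos : forall x : R, 0 < x ^+ 2 + eps ^+ 2.
  by move=> x; rewrite ltr_wpDl // ?sqr_ge0 // exprn_gt0.
pose u n := fp p eps (z n).
have Hwn : forall n i, (1 <= n)%N ->
    w n ord0 i = p / 2 * powR (z n ord0 i ^+ 2 + eps ^+ 2) (p / 2 - 1).
  by move=> [|n] i //= _; rewrite Hw.
have wge0 : forall n i, (1 <= n)%N -> 0 <= w n ord0 i.
  by move=> n i n1; rewrite Hwn // mulr_ge0 // ?powR_ge0 // ltW.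
have Cz : forall n, (1 <= n)%N -> C (z n) by move=> [|n] //= _; case: (Hz n).
have desc : forall n, (1 <= n)%N -> u n.+1 +
    \sum_(i < m) w n ord0 i * (z n ord0 i - z n.+1 ord0 i) ^+ 2 <= u n.
  move=> n n1.
  have [Czn1 Hmin] := Hz n.
  have gap := @qmin_gap R m C (fun i => w n ord0 i) (z n.+1) Ccv Czn1 Hmin (z n) (Cz n n1).
  have tan : u n.+1 <= u n + (\sum_(i < m) w n ord0 i * z n.+1 ord0 i ^+ 2 -
                               \sum_(i < m) w n ord0 i * z n ord0 i ^+ 2).
    rewrite /u /fp -sumrB -big_split /=; apply: ler_sum => i _.
    rewrite Hwn //.
    have T := @tangent R (p/2) _ _ q0 q1 (hpos (z n ord0 i)) (hpos (z n.+1 ord0 i)).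
    by rewrite arith2 in T.
  simpl in gap; lra.
have mono : forall n, (1 <= n)%N -> u n.+1 <= u n.
  move=> n n1; apply: le_trans (desc n n1); rewrite lerDl sumr_ge0 // => i _.
  by rewrite mulr_ge0 ?wge0 ?sqr_ge0.
have mono' : forall n k, (1 <= n)%N -> (n <= k)%N -> u k <= u n.
  move=> n; elim=> [|k IH] n1 nk; first by move: (leq_trans n1 nk).
  move: nk; rewrite leq_eqVlt => /orP[/eqP <-|nk]; first by [].
  exact: le_trans (mono k (leq_trans n1 nk)) (IH n1 nk).
have u1ge0 : 0 <= u 1%N by rewrite /u /fp sumr_ge0 // => i _; exact: powR_ge0.
pose M := powR (u 1%N) (p / 2)^-1.
have hterm : forall n i, (1 <= n)%N -> powR (z n ord0 i ^+ 2 + eps ^+ 2) (p / 2) <= u 1%N.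
  move=> n i n1; apply: le_trans (mono' 1%N n isT n1).
  rewrite /u /fp (bigD1 i) //= lerDl sumr_ge0 // => j _; exact: powR_ge0.
have hX : forall n i, (1 <= n)%N -> z n ord0 i ^+ 2 + eps ^+ 2 <= M.
  move=> n i n1.
  have E : z n ord0 i ^+ 2 + eps ^+ 2 =
      powR (powR (z n ord0 i ^+ 2 + eps ^+ 2) (p / 2)) (p / 2)^-1.
    by rewrite -powRrM mulfV ?gt_eqF // powRr1 // ltW.
  rewrite E /M; apply: (@ge0_ler_powR R (p / 2)^-1); last exact: hterm.
  - by rewrite invr_ge0 ltW.
  - by rewrite nnegrE powR_ge0.
  - by rewrite nnegrE.
pose i0 : 'I_m := Ordinal m1.
have Mpos : 0 < M := lt_le_trans (hpos _) (hX 1%N i0 isT).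
have u1pos : 0 < u 1%N.
  exact: lt_le_trans (powR_gt0 _ (hpos (z 1%N ord0 i0))) (hterm 1%N i0 isT).
pose c := p / 2 * powR M (p / 2 - 1).
have cpos : 0 < c by rewrite mulr_gt0 // powR_gt0.
have wlow : forall n i, (1 <= n)%N -> c <= w n ord0 i.
  move=> n i n1; rewrite Hwn // /c; apply: ler_wpM2l; first exact: ltW.
  have -> : p / 2 - 1 = - (1 - p / 2) by ring.
  rewrite !powRN lef_pV2 ?posrE ?powR_gt0 //.
  apply: (@ge0_ler_powR R (1 - p / 2)); last exact: hX.
  - by rewrite subr_ge0 ltW.
  - by rewrite nnegrE ltW.
  - by rewrite nnegrE ltW.
have box : forall n i, (1 <= n)%N -> `|z n ord0 i| <= M + 1.
  move=> n i n1; have := hX n i n1.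
  have := sqr_ge0 (z n ord0 i - 1); have := sqr_ge0 (z n ord0 i + 1).
  have := sqr_ge0 eps.
  rewrite ler_norml => *; apply/andP; split; nra.
pose K := [set v : 'rV[R]_m | forall i, v ord0 i \in `[- (M + 1), M + 1]].
have cK : compact K.
  apply: (@rV_compact _ _ (fun=> `[- (M + 1), M + 1]%classic)).
  by move=> _; apply: segment_compact.
have FK : (z @ \oo) K.
  exists 1%N => // n /= n1 i.
  by rewrite in_itv /= -ler_norml; exact: box.
have [zc [_ Hcl]] := cK _ _ FK.
have zlim : seq_limit_point z zc.
  move=> e e0' N.
  have := Hcl (z @` [set n | (maxn N 1 <= n)%N]) (ball zc e) _ (nbhsx_ballx zc e e0').
  case.
    by exists (maxn N 1) => // n /= Hn; exists n.
  move=> y [[n Hn <-] Hb]; exists n.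
  move: Hn; rewrite /= geq_max => /andP[Nn n1]; split => //; split => //.
  by move: Hb; rewrite -ball_normE /= distrC.
have [sc [Hsc1 Hsc2]] := @limpt_subseq R m z zc zlim.
have usc : u (sc k) @[k --> \oo] --> fp p eps zc.
  exact: (@fp_cvg R m p eps (fun k => z (sc k)) zc e0 Hsc2).
have Llow : forall n, (1 <= n)%N -> fp p eps zc <= u n.
  move=> n n1; apply: (@lim_le R (fun k => u (sc k)) _ _ _ usc).
  exists n => // k /= Hk; apply: mono' => //.
  exact: leq_trans Hk (proj2 (Hsc1 k)).
have ucvg : u n @[n --> \oo] --> fp p eps zc.
  apply/cvgrPdist_lt => e e0'.
  move/cvgrPdist_lt: usc => /(_ e e0') [N _ HN].
  exists (sc N) => // n /= Hn.
  have n1 : (1 <= n)%N := leq_trans (proj1 (Hsc1 N)) Hn.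
  have h1 := HN N (leqnn N).
  have h2 := mono' (sc N) n (proj1 (Hsc1 N)) Hn.
  have h3 := Llow n n1.
  move: h1; rewrite /= !ltr_norml => /andP[a b].
  apply/andP; split; lra.
have ushift : u n.+1 @[n --> \oo] --> fp p eps zc.
  exact: (@subseq_cvg R u _ S (fun k => leqnSn k) ucvg).
have gapcvg : (u n - u n.+1) @[n --> \oo] --> 0.
  have := cvgB ucvg ushift; rewrite subrr; exact.
have dcvg : forall i, (z n.+1 ord0 i - z n ord0 i) @[n --> \oo] --> 0.
  move=> i; apply/cvgrPdist_lt => e e0'.
  move/cvgrPdist_lt: gapcvg => /(_ (c * e ^+ 2) (mulr_gt0 cpos (exprn_gt0 2 e0'))).
  move=> [N _ HN].
  exists (maxn N 1) => // n /=; rewrite geq_max => /andP[Nn n1].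
  have h := HN n Nn.
  have d := desc n n1.
  have t : c * (z n ord0 i - z n.+1 ord0 i) ^+ 2 <=
      \sum_(j < m) w n ord0 j * (z n ord0 j - z n.+1 ord0 j) ^+ 2.
    apply: le_trans (ler_wpM2r (sqr_ge0 _) (wlow n i n1)) _.
    rewrite (bigD1 i) //= lerDl sumr_ge0 // => j _.
    by rewrite mulr_ge0 ?wge0 ?sqr_ge0.
  move: h; rewrite sub0r normrN => h.
  have h' : u n - u n.+1 < c * e ^+ 2 := le_lt_trans (ler_norm _) h.
  have hd : (z n ord0 i - z n.+1 ord0 i) ^+ 2 < e ^+ 2.
    rewrite -(ltr_pM2l cpos); lra.
  rewrite sub0r normrN ltr_norml; apply/andP; split; nra.
have kkt : forall zbar, seq_limit_point z zbar -> KKT_point p eps C zbar.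
  move=> zbar Hl.
  have [s [Hs1 Hs2]] := @limpt_subseq R m z zbar Hl.
  have zbarC : C zbar.
    apply: (closed_cvg C Ccl _ zbar Hs2).
    by exists 0%N => // k _; apply: Cz; exact: (proj1 (Hs1 k)).
  have cz : forall i, z (s k) ord0 i @[k --> \oo] --> zbar ord0 i.
    by move=> i; exact: (@coord_cvg R m (fun k => z (s k)) zbar i Hs2).
  have cz1 : forall i, z (s k).+1 ord0 i @[k --> \oo] --> zbar ord0 i.
    move=> i.
    have E : (fun k => z (s k).+1 ord0 i) =
        (fun k => z (s k) ord0 i + (z (s k).+1 ord0 i - z (s k) ord0 i)).
      by apply/funext => k; rewrite addrC subrK.
    rewrite E -[zbar ord0 i]addr0; apply: cvgD; first exact: cz.
    exact: (@subseq_cvg R (fun n => z n.+1 ord0 i - z n ord0 i) 0 s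
              (fun k => proj2 (Hs1 k)) (dcvg i)).
  have VI : forall y, C y -> 0 <= \sum_(i < m) (p / 2 * powR (zbar ord0 i ^+ 2 + eps ^+ 2) (p / 2 - 1))
                 * zbar ord0 i * (y ord0 i - zbar ord0 i).
    move=> y Cy.
    apply: (@lim_ge R (fun k => \sum_(i < m) (p / 2 * powR (z (s k) ord0 i ^+ 2 + eps ^+ 2) (p / 2 - 1))
                 * z (s k).+1 ord0 i * (y ord0 i - z (s k).+1 ord0 i))).
      exists 0%N => // k _ /=.
      have [Cz1 Hmin] := Hz (s k).
      have := @qmin_vi R m C (fun i => w (s k) ord0 i) (z (s k).+1) Ccv Cz1 Hmin y Cy.
      suff -> : \sum_(i < m) (p / 2 * powR (z (s k) ord0 i ^+ 2 + eps ^+ 2) (p / 2 - 1))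
                 * z (s k).+1 ord0 i * (y ord0 i - z (s k).+1 ord0 i) =
               \sum_(i < m) w (s k) ord0 i * z (s k).+1 ord0 i * (y ord0 i - z (s k).+1 ord0 i) by [].
      by apply: eq_bigr => i _; rewrite Hwn //; exact: (proj1 (Hs1 k)).
    apply: sum_cvgn => i; apply: cvgM; last by apply: cvgB; [exact: cvg_cst | exact: cz1].
    apply: cvgM; last exact: cz1.
    apply: cvgM; first exact: cvg_cst.
    apply: powR_cvgn; first exact: hpos.
    apply: sqe_cvg; exact: cz.
  split => //; exists (- grad (fp p eps) zbar); split; last by rewrite addrN.
  move=> x Cx; rewrite /inner.
  have -> : \sum_(i < m) (- grad (fp p eps) zbar) ord0 i * (x - zbar) ord0 i =
     - (2 * \sum_(i < m) (p / 2 * powR (zbar ord0 i ^+ 2 + eps ^+ 2) (p / 2 - 1))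
                 * zbar ord0 i * (x ord0 i - zbar ord0 i)).
    rewrite mulr_sumr -sumrN; apply: eq_bigr => i _.
    rewrite mxE grad_fp // !mxE.
    move: (powR _ _) => P.
    have h2 : (2 : R) != 0 by rewrite pnatr_eq0.
    by field.
  by rewrite oppr_le0 mulr_ge0 // VI.
split => //.
split => //.
by exists zc; split; [exact: kkt | exact: ucvg].
Qed.
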